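(* For every $x\in\mathrm{mon}(\mathcal{B})$, \[ \limsup_{N\to\infty}\frac1{\log N}\sum_{n=1}^N(x^*_n)^2\le1, \] where $x^*$ is the decreasing rearrangement of $(|x_n|)_{n\in\mathbb{N}}$.
   Context: For $N\in\mathbb{N}$, $\mathcal{B}_N$ is the space of functions $f\colon\{-1,1\}^N\to\mathbb{R}$ with sup norm and Fourier–Walsh coefficients $\widehat f(S)=2^{-N}\sum_xf(x)x^S$, $x^S=\prod_{n\in S}x_n$; $\mathcal{B}=\bigcup_N\mathcal{B}_N$. $\mathrm{mon}(\mathcal{B})$ is the set of $x\in\mathbb{R}^{\mathbb{N}}$ for which there is $C>0$ such that $\sum_{S\subset\{1,\dots,N\}}|\widehat f(S)x^S|\le C\|f\|_\infty$ for all $N$ and all $f\in\mathcal{B}_N$. (Elements of $\mathrm{mon}(\mathcal{B})$ tend to $0$, so the decreasing rearrangement is well defined.) $\log$ is natural. *)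

(* Defs.v *)
From HB Require Import structures.
From mathcomp Require Import all_boot all_order all_algebra.
From mathcomp Require Import all_classical all_reals all_analysis.
Set Implicit Arguments. Unset Strict Implicit. Unset Printing Implicit Defensive.
Import Order.TTheory GRing.Theory Num.Theory.
Local Open Scope classical_set_scope.
Local Open Scope ring_scope.

(* The cube {-1,1}^N, a point being encoded by 'I_N -> bool
   (true <-> +1, false <-> -1). *)
Definition cube (N : nat) : finType := {ffun 'I_N -> bool}.

Definition sgn {R : realType} (b : bool) : R := if b then 1 else -1.

Definition cube_mono {R : realType} (N : nat) (S : {set 'I_N}) (x : cube N) : R :=
  \prod_(n in S) sgn (x n).

Definition supnorm {R : realType} (N : nat) (f : cube N -> R) : R :=
  \big[Num.max/0]_(x : cube N) `|f x|.

Definition fw_coef {R : realType} (N : nat) (f : cube N -> R) (S : {set 'I_N}) : R :=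
  (2 ^+ N)^-1 * \sum_(x : cube N) f x * cube_mono S x.

(* monomial of a real sequence: x^S = prod_{n in S} x_n
   (the coordinates of {-1,1}^N are identified with the first N indices
    of the sequence, index 0 of the sequence playing the role of x_1) *)
Definition seq_mono {R : realType} (N : nat) (x : nat -> R) (S : {set 'I_N}) : R :=
  \prod_(n in S) x (nat_of_ord n).

Definition monB {R : realType} (x : nat -> R) : Prop :=
  exists C : R, 0 < C /\
    forall (N : nat) (f : cube N -> R),
      \sum_(S : {set 'I_N}) `|fw_coef f S * seq_mono x S| <= C * supnorm f.

(* decreasing rearrangement x^*_n (n >= 1) of (|x_k|)_k :
   x^*_n = inf { sup_{k notin J} |x_k| : J finite, #J < n }. *)
Definition decr_rearr {R : realType} (x : nat -> R) (n : nat) : R :=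
  inf [set s : R | exists J : seq nat,
        [/\ uniq J, (size J < n)%N &
            s = sup [set `|x k| | k in [set k : nat | k \notin J]]]].

(* Main.v *)
Require Import Defs.
From HB Require Import structures.
From mathcomp Require Import all_boot all_order all_algebra.
From mathcomp Require Import all_classical all_reals all_analysis.
From mathcomp Require Import zify ring lra.
Import Order.TTheory GRing.Theory Num.Theory.
Local Open Scope ring_scope.

Module Aux.
Set Implicit Arguments. Unset Strict Implicit. Unset Printing Implicit Defensive.

Section T.
Variable R : realType.

Lemma khin_pt (l t : R) : 0 < l -> t ^+ 2 / l - 4 * t ^+ 4 / (27 * l ^+ 3) <= `|t|.
Proof.
move=> l0; set u := `|t|.
have e2 : t ^+ 2 = u ^+ 2 by rewrite real_normK ?num_real.
have e4 : t ^+ 4 = (u ^+ 2) ^+ 2 by rewrite -e2 -exprM.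
rewrite e2 e4 -subr_ge0.
have u0 : 0 <= u by apply: normr_ge0.
have -> : u - (u ^+ 2 / l - 4 * (u ^+ 2) ^+ 2 / (27 * l ^+ 3)) =
   (u * (2 * u - 3 * l) ^+ 2 * (u + 3 * l)) / (27 * l ^+ 3).
  by field; rewrite gt_eqF // exprn_gt0.
apply: divr_ge0; last by rewrite mulr_ge0 // exprn_ge0 // ltW.
apply: mulr_ge0; [apply: mulr_ge0; [exact: u0 | exact: sqr_ge0] | lra].
Qed.

Lemma sum_sets_ge N (F : {set 'I_N} -> R) : (forall S, 0 <= F S) ->
  \sum_i F [set i] <= \sum_S F S.
Proof.
move=> F0.
rewrite [X in _ <= X](bigID (fun S => S \in [set [set i] | i : 'I_N])) /=.
rewrite -[X in X <= _]addr0 lerD //; last by apply: sumr_ge0.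
rewrite (big_imset _ (in2W (@set1_inj _))) /=.
by apply/eqP; rewrite eq_le lexx.

Qed.
End T.
Section Cube.
Variable R : realType.
Variable N : nat.

Definition flip (i : 'I_N) (y : cube N) : cube N :=
  [ffun j => if j == i then ~~ y j else y j].

Lemma flipK i : involutive (flip i).
Proof.
move=> y; apply/ffunP => j; rewrite !ffunE; case: eqP => // ->.
by rewrite negbK.
Qed.

Lemma flip_inj i : injective (flip i).
Proof. exact: inv_inj (flipK i). Qed.

Lemma sgn_flip i y : sgn (flip i y i) = - (sgn (y i) : R).
Proof. by rewrite ffunE eqxx /sgn; case: (y i); rewrite ?opprK. Qed.

Lemma sgn2 (b : bool) : (sgn b : R) ^+ 2 = 1.
Proof. by rewrite /sgn; case: b; rewrite ?sqrrN expr1n. Qed.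

Lemma sum_odd i (F : cube N -> R) : (forall y, F (flip i y) = F y) ->
  \sum_y F y * sgn (y i) = 0.
Proof.
move=> HF; set S := (\sum_y _).
have : S = - S.
  rewrite {1}/S (reindex_inj (@flip_inj i)) /= -sumrN.
  by apply: eq_bigr => y _; rewrite HF sgn_flip mulrN.
move=> h; lra.
Qed.

Variable x : nat -> R.

Definition X (k : nat) (y : cube N) : R :=
  \sum_(i : 'I_N | (i < k)%N) x i * sgn (y i).
Definition s (k : nat) : R := \sum_(i : 'I_N | (i < k)%N) x i ^+ 2.

Lemma X_flip k (i : 'I_N) y : (k <= i)%N -> X k (flip i y) = X k y.
Proof.
move=> ki; apply: eq_bigr => j jk; rewrite ffunE.
case: eqP => // ji; exfalso; move: jk; rewrite ji ltnNge ki //.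
Qed.

Lemma X0 y : X 0 y = 0.
Proof. by rewrite /X big_pred0. Qed.
Lemma s0 : s 0 = 0.
Proof. by rewrite /s big_pred0. Qed.

Lemma XS k (hk : (k < N)%N) y :
  X k.+1 y = X k y + x k * sgn (y (Ordinal hk)).
Proof.
rewrite /X (bigD1 (Ordinal hk)) //= addrC; congr (_ + _).
apply: eq_bigl => j; by rewrite ltnS -val_eqE /= ltn_neqAle andbC.
Qed.


Lemma bigS k (hk : (k < N)%N) (F : 'I_N -> R) :
  \sum_(i : 'I_N | (i < k.+1)%N) F i = \sum_(i : 'I_N | (i < k)%N) F i + F (Ordinal hk).
Proof.
rewrite (bigD1 (Ordinal hk)) //= addrC; congr (_ + _).
apply: eq_bigl => j; by rewrite ltnS -val_eqE /= ltn_neqAle andbC.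
Qed.

Lemma sS k (hk : (k < N)%N) : s k.+1 = s k + x k ^+ 2.
Proof. by rewrite /s bigS. Qed.

Lemma s_ge0 k : 0 <= s k.
Proof. by apply: sumr_ge0 => i _; apply: sqr_ge0. Qed.

Lemma card_cube : \sum_(y : cube N) (1 : R) = 2 ^+ N.
Proof. by rewrite sumr_const card_ffun card_bool card_ord -natrX. Qed.

Lemma moments k : (k <= N)%N ->
  \sum_y X k y ^+ 2 = 2 ^+ N * s k /\
  \sum_y X k y ^+ 4 <= 3 * 2 ^+ N * s k ^+ 2.
Proof.
elim: k => [|k IH] hk.
  rewrite s0; split; rewrite big1 => [|y _]; rewrite ?X0 ?expr0n /= ?mulr0 //.
have hk' : (k < N)%N by [].
have [IH2 IH4] := IH (ltnW hk).
set a := x k.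
have c0 : (0 : R) <= 2 ^+ N by apply: exprn_ge0.
have hsk := s_ge0 k.
have o1 : \sum_y X k y * sgn (y (Ordinal hk')) = 0.
  by apply: sum_odd => y; apply: X_flip.
have o3 : \sum_y X k y ^+ 3 * sgn (y (Ordinal hk')) = 0.
  by apply: sum_odd => y; rewrite X_flip.
have E2 : forall y, X k.+1 y ^+ 2 = X k y ^+ 2 + (2 * a) * (X k y * sgn (y (Ordinal hk'))) + a ^+ 2.
  move=> y; rewrite XS; have h := @sgn2 (y (Ordinal hk')).
  set e := sgn _ in h *.
  have -> : (X k y + a * e) ^+ 2 = X k y ^+ 2 + 2 * a * (X k y * e) + a ^+ 2 + a^+2 * (e ^+ 2 - 1) by ring.
  by rewrite h subrr mulr0 addr0.
have E4 : forall y, X k.+1 y ^+ 4 = X k y ^+ 4 + (4 * a) * (X k y ^+ 3 * sgn (y (Ordinal hk')))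
   + (6 * a ^+ 2) * X k y ^+ 2 + (4 * a ^+ 3) * (X k y * sgn (y (Ordinal hk'))) + a ^+ 4.
  move=> y; rewrite XS; have h := @sgn2 (y (Ordinal hk')).
  set e := sgn _ in h *.
  have -> : (X k y + a * e) ^+ 4 = X k y ^+ 4 + 4 * a * (X k y ^+ 3 * e) + 6 * a ^+ 2 * X k y ^+ 2
     + 4 * a ^+ 3 * (X k y * e) + a ^+ 4 + (e ^+ 2 - 1) * (6 * a ^+ 2 * X k y ^+ 2 + 4 * a ^+ 3 * X k y * e + a ^+ 4 * (e ^+ 2 + 1)) by ring.
  by rewrite h subrr mul0r addr0.
have K2 : \sum_(y : cube N) a ^+ 2 = a ^+ 2 * 2 ^+ N.
  by rewrite -card_cube mulr_sumr; apply: eq_bigr => *; rewrite mulr1.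
have K4 : \sum_(y : cube N) a ^+ 4 = a ^+ 4 * 2 ^+ N.
  by rewrite -card_cube mulr_sumr; apply: eq_bigr => *; rewrite mulr1.
rewrite sS //; split.
  under eq_bigr do rewrite E2.
  rewrite !big_split /= K2 -!mulr_sumr o1 IH2 /a; ring.
under eq_bigr do rewrite E4.
rewrite !big_split /= K4 -!mulr_sumr o1 o3 IH2.
have ha : 0 <= a ^+ 4 by rewrite (_ : a ^+ 4 = (a ^+ 2) ^+ 2) ?sqr_ge0 // -exprM.
have : 3 * 2 ^+ N * (s k + a ^+ 2) ^+ 2 - (3 * 2 ^+ N * s k ^+ 2 + 4 * a * 0 + 6 * a ^+ 2 * (2 ^+ N * s k) + 4 * a ^+ 3 * 0 + 2 ^+ N * a ^+ 4)
   = 2 * 2 ^+ N * a ^+ 4 by ring.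
move=> h.
have h3 : 0 <= 2 * 2 ^+ N * a ^+ 4 by rewrite mulr_ge0 // mulr_ge0.
rewrite /a in h h3 ha IH4 *.
lra.
Qed.
End Cube.

Section L2.
Variable R : realType.

Lemma fourier_link N (x : nat -> R) (f : cube N -> R) :
  (2 ^+ N)^-1 * \sum_y f y * X x N y = \sum_i fw_coef f [set i] * seq_mono x [set i].
Proof.
rewrite /fw_coef /seq_mono /cube_mono /X.
transitivity (\sum_y \sum_(i : 'I_N) (2 ^+ N)^-1 * (f y * (x i * sgn (y i)))).
  rewrite mulr_sumr; apply: eq_bigr => y _.
  rewrite (eq_bigl xpredT); last by move=> i; rewrite ltn_ord.
  by rewrite mulr_sumr mulr_sumr.
rewrite exchange_big /=; apply: eq_bigr => i _.
rewrite mulr_sumr mulr_suml; apply: eq_bigr => y _; rewrite big_set1 big_set1; ring.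
Qed.

Lemma monB_l2 (x : nat -> R) : monB x ->
  exists K, 0 <= K /\ forall N, \sum_(k < N) x k ^+ 2 <= K.
Proof.
case=> C [C0 HC]; exists ((9 * C / 5) ^+ 2); split; first exact: sqr_ge0.
move=> N.
pose f := fun y : cube N => if 0 <= X x N y then (1 : R) else -1.
have hf : forall y, f y * X x N y = `|X x N y|.
  move=> y; rewrite /f; case: ifP => h.
    by rewrite mul1r ger0_norm.
  by rewrite mulN1r ltr0_norm // ltNge h.
have sup1 : supnorm f <= 1.
  rewrite /supnorm; apply: bigmax_le => // y _; rewrite /f.
  by case: ifP => _; rewrite ?normrN normr1.
have c0 : (0 : R) < 2 ^+ N by apply: exprn_gt0.
have L : (2 ^+ N)^-1 * (\sum_(y : cube N) `|X x N y|) <= C.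
  under eq_bigr do rewrite -hf.
  rewrite fourier_link.
  apply: (le_trans (ler_sum _ (fun i _ => ler_norm _))).
  have H1 := @sum_sets_ge R N (fun S => `|fw_coef f S * seq_mono x S|) (fun S => normr_ge0 _).
  apply: le_trans H1 _.
  apply: (le_trans (HC N f)).
  by rewrite -[X in _ <= X]mulr1 ler_wpM2l // ltW.
have [M2 M4] := moments x (leqnn N).
have sN : s N x N = \sum_(k < N) x k ^+ 2.
  by apply: eq_bigl => i; rewrite ltn_ord.
rewrite -sN.
have s0 := @s_ge0 R N x N.
have [sz|spos] := eqVneq (s N x N) 0.
  by rewrite sz sqr_ge0.
set l := Num.sqrt (s N x N).
have l0 : 0 < l by rewrite sqrtr_gt0 lt_neqAle eq_sym spos s0.
have sl : s N x N = l ^+ 2 by rewrite sqr_sqrtr.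
have low : \sum_(y : cube N) (X x N y ^+ 2 / l - 4 * X x N y ^+ 4 / (27 * l ^+ 3)) <= \sum_(y : cube N) `|X x N y|.
  by apply: ler_sum => y _; apply: khin_pt.
set A := \sum_(y : cube N) X x N y ^+ 4 in M4.
have e1 : \sum_(y : cube N) (X x N y ^+ 2 / l - 4 * X x N y ^+ 4 / (27 * l ^+ 3)) =
   (\sum_(y : cube N) X x N y ^+ 2) / l - 4 * A / (27 * l ^+ 3).
  by rewrite sumrB -!mulr_suml -mulr_sumr.
rewrite e1 in low.
have l3 : 0 < 27 * l ^+ 3 by rewrite mulr_gt0 // exprn_gt0.
have t1 : (\sum_(y : cube N) X x N y ^+ 2) / l = 2 ^+ N * l.
  by rewrite M2 sl; field; rewrite gt_eqF.
have t2 : 4 * A / (27 * l ^+ 3) <= 4 * 2 ^+ N * l / 9.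
  rewrite ler_pdivrMr //.
  have -> : 4 * 2 ^+ N * l / 9 * (27 * l ^+ 3) = 4 * (3 * 2 ^+ N * s N x N ^+ 2).
    by rewrite sl; field.
  lra.
have key : 2 ^+ N * l * (5 / 9) <= \sum_(y : cube N) `|X x N y|.
  rewrite t1 in low; lra.
have : l * (5 / 9) <= C.
  apply: le_trans L; rewrite ler_pdivlMl //; lra.
move=> hl; rewrite sl; rewrite lerXn2r ?nnegrE; try lra.

Qed.
End L2.

Lemma exists_notin (J : seq nat) : exists k, k \notin J.
Proof.
have : ~~ all (mem J) (iota 0 (size J).+1).
  apply/negP => /allP H.
  by have := uniq_leq_size (iota_uniq 0 (size J).+1) H; rewrite size_iota ltnn.
by case/allPn => k _ hk; exists k.
Qed.

Section DR.
Variable R : realType.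
Variable x : nat -> R.
Variable B : R.
Hypothesis hB : forall k, `|x k| <= B.

Local Open Scope classical_set_scope.
Definition E (J : seq nat) := [set `|x k| | k in [set k : nat | k \notin J]].

Lemma E_sup J : has_sup (E J).
Proof.
split; first by have [k hk] := exists_notin J; exists `|x k|; exists k.
by exists B => _ [k _ <-].
Qed.

Lemma E_sup_ge0 J : 0 <= sup (E J).
Proof.
have [k hk] := exists_notin J.
apply: le_trans (normr_ge0 (x k)) _.
by apply: ub_le_sup; [case: (E_sup J)|exists k].
Qed.

Lemma E_sup_le J t : (forall k, k \notin J -> `|x k| <= t) -> sup (E J) <= t.
Proof.
move=> h; apply: ge_sup; first by case: (E_sup J).
by move=> _ [k hk <-]; apply: h.
Qed.

Lemma dr_ge0 n : (0 < n)%N -> 0 <= decr_rearr x n.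
Proof.
move=> n0; apply: lb_le_inf.
  by exists (sup (E [::])), [::]; split.
by move=> _ [J [_ _ ->]]; apply: E_sup_ge0.
Qed.

Lemma dr_le n J t : uniq J -> (size J < n)%N ->
  (forall k, k \notin J -> `|x k| <= t) -> decr_rearr x n <= t.
Proof.
move=> uJ sJ h; apply: le_trans (E_sup_le h).
apply: ge_inf; last by exists J; split.
by exists 0 => _ [J' [_ _ ->]]; apply: E_sup_ge0.
Qed.
End DR.

Section Tail.
Variable R : realType.
Variable x : nat -> R.
Variable K : R.
Hypothesis hK : forall N, \sum_(k < N) x k ^+ 2 <= K.

Lemma x_bound k : `|x k| <= Num.sqrt K.
Proof.
have h : x k ^+ 2 <= K.
  apply: le_trans (hK k.+1); rewrite big_ord_recr /= -[X in X <= _]add0r lerD2r.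
  by apply: sumr_ge0 => i _; apply: sqr_ge0.
by rewrite -sqrtr_sqr ler_sqrt // (le_trans _ h) // sqr_ge0.
Qed.

Local Open Scope classical_set_scope.
Lemma tail : exists M, forall Q, \sum_(M <= k < (M + Q)%N) x k ^+ 2 < 1 / 2.
Proof.
pose P n := \sum_(0 <= k < n) x k ^+ 2.
have hP : forall n, P n <= K by move=> n; rewrite /P big_mkord.
have hs : has_sup (range P).
  by split; [exists (P 0), 0 | exists K => _ [n _ <-]].
have h2 : (0:R) < 1 / 2 by lra.
have [_ [M _ <-] hM] := sup_adherent h2 hs.
exists M => Q.
have e : P (M + Q)%N = P M + \sum_(M <= k < (M + Q)%N) x k ^+ 2.
  by rewrite /P (@big_cat_nat _ _ _ M 0 (M + Q)%N) //= leq_addr.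
have : P (M + Q)%N <= sup (range P) by apply: ub_le_sup; [case: hs | exists (M + Q)%N].
lra.
Qed.

Lemma count_le (a : R) (r : seq nat) : 0 <= a ->
  (count (fun k => a < x k ^+ 2) r)%:R * a <= \sum_(k <- r) x k ^+ 2.
Proof.
move=> a0; elim: r => [|k r IH]; first by rewrite big_nil mul0r.
rewrite big_cons /= natrD mulrDl; apply: lerD => //.
have [h|h] := boolP (a < x k ^+ 2).
  by rewrite /= mulr1n mul1r ltW.
by rewrite /= mulr0n mul0r sqr_ge0.
Qed.

Lemma count_iota_mono (p : pred nat) Q k : (Q <= k)%N -> (count p (iota 0 Q) <= count p (iota 0 k))%N.
Proof.
move=> hk; rewrite -(subnKC hk) iotaD count_cat; exact: leq_addr.
Qed.

Lemma dr_small M n : (forall Q, \sum_(M <= k < (M + Q)%N) x k ^+ 2 < 1 / 2) ->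
  (0 < n)%N -> (2 * M <= n)%N -> decr_rearr x n ^+ 2 <= n%:R^-1.
Proof.
move=> hM n0 Mn.
set a : R := n%:R^-1.
have a0 : 0 < a by rewrite invr_gt0 ltr0n.
pose p := fun k => a < x k ^+ 2.
have c1 : forall Q, (count p (iota 0 Q) < n)%N.
  move=> Q.
  apply: leq_ltn_trans (count_iota_mono p (leq_addl M Q)) _.
  rewrite iotaD count_cat add0n.
  have h1 := count_size p (iota 0 M); rewrite size_iota in h1.
  have h2 := count_le (iota M Q) (ltW a0).
  have e : \sum_(k <- iota M Q) x k ^+ 2 = \sum_(M <= k < (M + Q)%N) x k ^+ 2.
    by rewrite /index_iota addKn.
  rewrite e in h2; have h3 := hM Q.
  set c := count p (iota M Q) in h2 *.
  have h4 : (2 * c < n)%N.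
    rewrite -(ltr_nat R).
    have h5 : (c%:R * a) * 2 < 1 by move: (le_lt_trans h2 h3); lra.
    have -> : (2 * c)%:R = (c%:R * a) * 2 * n%:R :> R.
      by rewrite natrM /a; field; rewrite pnatr_eq0 -lt0n.
    by rewrite -[X in _ < X]mul1r ltr_pM2r // ltr0n.
  lia.
have [Q HQ] : exists Q, forall k, (Q <= k)%N -> ~~ p k.
  apply: contrapT => hn.
  have H : forall Q, exists k, (Q <= k)%N /\ p k.
    move=> Q; apply: contrapT => hq; apply: hn; exists Q => k hk.
    by apply/negP => pk; apply: hq; exists k.
  have H2 : forall m, exists Q, (m <= count p (iota 0 Q))%N.
    elim=> [|m [Q hQ]]; first by exists 0.
    have [k [hk pk]] := H Q; exists k.+1.
    have -> : iota 0 k.+1 = iota 0 k ++ iota k 1 by rewrite -iotaD addn1.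
    rewrite count_cat /= pk addn0.
    by rewrite addn1 ltnS (leq_trans hQ) // count_iota_mono.
  have [Q hQ] := H2 n.
  by have := c1 Q; rewrite ltnNge hQ.
pose J := seq.filter p (iota 0 Q).
have hJ : forall k, k \notin J -> `|x k| <= Num.sqrt a.
  move=> k; rewrite mem_filter mem_iota /= add0n negb_and => h.
  have npk : ~~ p k.
    case/orP: h => // hk; apply: HQ; by rewrite leqNgt.
  by rewrite -sqrtr_sqr ler_sqrt ?(ltW a0) // leNgt.
have hB := x_bound.
have d0 := dr_ge0 hB n0.
have sJ : (size J < n)%N by rewrite size_filter c1.
have d1 := dr_le hB (filter_uniq p (iota_uniq 0 Q)) sJ hJ.
rewrite -(sqr_sqrtr (ltW a0)) lerXn2r ?nnegrE // sqrtr_ge0.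
Qed.
End Tail.

Section H.
Variable R : realType.

Lemma harm N : (0 < N)%N -> \sum_(1 <= n < N.+1) (n%:R : R)^-1 <= 1 + ln (N%:R : R).
Proof.
elim: N => [//|N IH] _.
case: N IH => [|N] IH.
  by rewrite big_nat1 ln1 invr1 addr0.
rewrite big_nat_recr //=.
have IH' := IH isT.
have hN : (0 : R) < N.+1%:R by rewrite ltr0n.
have hN2 : (0 : R) < N.+2%:R by rewrite ltr0n.
have key : N.+2%:R^-1 <= ln (N.+2%:R : R) - ln (N.+1%:R : R).
  have h1 : - 1 < - (N.+2%:R : R)^-1.
    rewrite ltrN2 invf_lt1 // ltr1n //.
  have := le_ln1Dx h1.
  have -> : 1 + - (N.+2%:R : R)^-1 = N.+1%:R / N.+2%:R.
    have e2 : (N.+2%:R : R) = N.+1%:R + 1 by rewrite -[in LHS]addn1 natrD.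
    have n2 : (N.+2%:R : R) != 0 by rewrite gt_eqF.
    rewrite e2; field; apply/negP => /eqP; have := ler0n R N; lra.
  rewrite ln_div ?posrE //.
  by move: (N.+2%:R^-1 : R) (ln (N.+2%:R : R)) (ln (N.+1%:R : R)) => a y z; lra.
move: key IH'.
move: (N.+2%:R^-1 : R) (ln (N.+2%:R : R)) (ln (N.+1%:R : R)) (\sum_(1 <= i < N.+2) (i%:R : R)^-1) => a y z w.
lra.
Qed.

Lemma ind_sum N0 N : (\sum_(1 <= n < N.+1) (n < N0)%N <= minn N N0)%N.
Proof.
elim: N => [|N IH]; first by rewrite big_geq.
rewrite big_nat_recr //=; case: (ltnP N.+1 N0) => h /=; lia.
Qed.

Lemma sum_bound (d : nat -> R) (B : R) N0 : 0 <= B ->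
  (forall n, (0 < n)%N -> d n <= B) ->
  (forall n, (0 < n)%N -> (N0 <= n)%N -> d n <= n%:R^-1) ->
  forall N, (0 < N)%N -> \sum_(1 <= n < N.+1) d n <= N0%:R * B + (1 + ln (N%:R : R)).
Proof.
move=> B0 hB hN N N0p.
apply: le_trans (_ : \sum_(1 <= n < N.+1) (B * ((n < N0)%N)%:R + n%:R^-1) <= _).
  apply: ler_sum_nat => n /andP [n1 _].
  case: (ltnP n N0) => h /=.
    by rewrite mulr1 -[X in X <= _]addr0 lerD // ?hB // invr_ge0 ler0n.
  by rewrite mulr0 add0r hN.
rewrite big_split /= -mulr_sumr lerD //; last exact: harm.
rewrite mulrC ler_wpM2r // -natr_sum ler_nat.
exact: leq_trans (ind_sum N0 N) (geq_minr _ _).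
Qed.

Lemma limsup_bound (S : nat -> R) (A : R) : 0 <= A ->
  (forall N, (0 < N)%N -> S N <= A + ln (N%:R : R)) ->
  (limn_esup (fun N : nat => ((ln (N%:R : R))^-1 * S N)%:E) <= 1%:E)%E.
Proof.
move=> A0 hS.
apply/lee_addgt0Pr => e e0.
rewrite limn_esup_lim; apply: lime_le; first exact: is_cvg_esups.
have hb := archi_boundP (expR_ge0 (A / e)).
set N1 := Num.bound (expR (A / e)) in hb.
exists (maxn 2 N1) => // n /= hn.
apply: ge_ereal_sup => _ [k /= nk <-].
have k2 : (2 <= k)%N by lia.
have kN1 : (N1 <= k)%N by lia.
have kpos : (0 : R) < k%:R by rewrite ltr0n; lia.
have lnk : 0 < ln (k%:R : R) by apply: ln_gt0; rewrite ltr1n.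
have lnk2 : A / e <= ln (k%:R : R).
  rewrite -[X in X <= _]expRK ler_ln ?posrE ?expR_gt0 //.
  apply: (le_trans (ltW hb)); by rewrite ler_nat.
have hSk := hS k (ltn_trans (isT : (0 < 1)%N) k2).
rewrite lee_fin.
have h := lnk2; rewrite ler_pdivrMr // in h.
move: h lnk hSk; move: (ln (k%:R : R)) (S k) => L s h lnk hSk.
rewrite ler_pdivrMl //; nra.
Qed.
End H.

End Aux.
Import Aux.

Theorem proposition6p13 (R : realType) (x : nat -> R) :
  monB x ->
  (limn_esup (fun N : nat =>
     ((ln (N%:R : R))^-1 * \sum_(1 <= n < N.+1) (decr_rearr x n) ^+ 2)%:E)
   <= 1%:E)%E.
Proof.
move=> hx.
have [K [K0 hK]] := monB_l2 hx.
have [M hM] := tail hK.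
have hB := x_bound hK.
apply: (@limsup_bound R _ ((2 * M)%:R * K + 1)).
  by apply: addr_ge0 => //; apply: mulr_ge0.
move=> N N0.
rewrite -addrA; apply: (@sum_bound R (fun n => decr_rearr x n ^+ 2) K (2 * M) K0) => //.
- move=> n n0.
  have d0 := dr_ge0 hB n0.
  have d1 : decr_rearr x n <= Num.sqrt K.
    by apply: (dr_le hB (J := [::])) => // k _; apply: hB.
  by rewrite -(sqr_sqrtr K0) lerXn2r ?nnegrE // sqrtr_ge0.
- by move=> n n0 hn; apply: (dr_small hK hM).
Qed.
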